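(* Let $\Lambda$ be any lattice in $\mathbb{E}^3$ whose shortest non-zero vector has length $2$. Then for every $n\ge 1$, $C_\Lambda(n)\le C_{fcc}(n)$. More precisely, there is a map $f:\Lambda\to\Lambda_{fcc}$ of the form $f(\alpha\mathbf{v}_1+\beta\mathbf{v}_2+\gamma\mathbf{v}_3)=\alpha\mathbf{w}_1+\beta\mathbf{w}_2+\gamma\mathbf{w}_3$ ($\alpha,\beta,\gamma\in\mathbb{Z}$), for suitable integral bases $\mathbf{v}_1,\mathbf{v}_2,\mathbf{v}_3$ of $\Lambda$ and $\mathbf{w}_1,\mathbf{w}_2,\mathbf{w}_3$ of $\Lambda_{fcc}$, such that $\mathrm{dist}(\mathbf{x},\mathbf{y})=2$ implies $\mathrm{dist}(f(\mathbf{x}),f(\mathbf{y}))=2$ for all $\mathbf{x},\mathbf{y}\in\Lambda$.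
   Context: A lattice in $\mathbb{E}^3$ is the set of integer linear combinations of three linearly independent vectors. $\Lambda_{fcc}$ is the face-centered cubic lattice with shortest non-zero vector of length $2$. For a lattice $L$, $C_L(n)$ is the largest number of touching pairs (centers at distance $2$) among packings of $n$ unit balls (pairwise disjoint interiors) with all centers in $L$; $C_{fcc}(n):=C_{\Lambda_{fcc}}(n)$. *)

(* Defs.v *)
From Stdlib Require Import Reals ZArith List.
Open Scope R_scope.

Definition vec := (R * R * R)%type.

Definition vzero : vec := (0, 0, 0).
Definition vadd (x y : vec) : vec :=
  let '(x1, x2, x3) := x in let '(y1, y2, y3) := y in (x1 + y1, x2 + y2, x3 + y3).
Definition vscale (a : R) (x : vec) : vec :=
  let '(x1, x2, x3) := x in (a * x1, a * x2, a * x3).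

Definition edist (x y : vec) : R :=
  let '(x1, x2, x3) := x in let '(y1, y2, y3) := y in
  sqrt ((x1 - y1)^2 + (x2 - y2)^2 + (x3 - y3)^2).

Definition comb (a b c : R) (v1 v2 v3 : vec) : vec :=
  vadd (vadd (vscale a v1) (vscale b v2)) (vscale c v3).

Definition zcomb (a b c : Z) (v1 v2 v3 : vec) : vec :=
  comb (IZR a) (IZR b) (IZR c) v1 v2 v3.

Definition lin_indep (v1 v2 v3 : vec) : Prop :=
  forall a b c : R, comb a b c v1 v2 v3 = vzero -> a = 0 /\ b = 0 /\ c = 0.

Definition pointset := vec -> Prop.

Definition lattice_basis (L : pointset) (v1 v2 v3 : vec) : Prop :=
  lin_indep v1 v2 v3 /\
  forall x, L x <-> exists a b c : Z, x = zcomb a b c v1 v2 v3.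

Definition is_lattice (L : pointset) : Prop :=
  exists v1 v2 v3, lattice_basis L v1 v2 v3.

Definition min_norm (L : pointset) (d : R) : Prop :=
  (exists x, L x /\ x <> vzero /\ edist x vzero = d) /\
  (forall x, L x -> x <> vzero -> d <= edist x vzero).

(* The face-centred cubic lattice with shortest non-zero vector of length 2:
   generated by sqrt 2 * (1,1,0), sqrt 2 * (1,0,1), sqrt 2 * (0,1,1). *)
Definition fcc1 : vec := (sqrt 2, sqrt 2, 0).
Definition fcc2 : vec := (sqrt 2, 0, sqrt 2).
Definition fcc3 : vec := (0, sqrt 2, sqrt 2).
Definition Lambda_fcc : pointset :=
  fun x => exists a b c : Z, x = zcomb a b c fcc1 fcc2 fcc3.

(* A packing of unit balls with centres in L, listed as a sequence of centres:
   all centres in L, pairwise (distinct positions) at distance >= 2,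
   i.e. the balls have pairwise disjoint interiors. *)
Definition packing (L : pointset) (P : list vec) : Prop :=
  (forall x, In x P -> L x) /\
  (forall i j, (i < j < length P)%nat ->
     2 <= edist (nth i P vzero) (nth j P vzero)).

Fixpoint contacts (P : list vec) : nat :=
  match P with
  | nil => 0%nat
  | x :: P' =>
      (length (filter (fun y => if Req_EM_T (edist x y) 2 then true else false) P')
       + contacts P')%nat
  end.

(* is_C L n m : m = C_L(n), the largest number of touching pairs among
   packings of n unit balls with centres in L (the maximum is attained). *)
Definition is_C (L : pointset) (n : nat) (m : nat) : Prop :=
  (exists P, packing L P /\ length P = n /\ contacts P = m) /\
  (forall P, packing L P -> length P = n -> (contacts P <= m)%nat).

(* Main.v *)
Require Import Defs.
From Stdlib Require Import Reals ZArith List Lra Lia Psatz Classical ClassicalEpsilon.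
Open Scope R_scope.

Definition G (g11 g22 g33 g12 g13 g23 a b c : R) :=
  g11*a*a + g22*b*b + g33*c*c + 2*g12*a*b + 2*g13*a*c + 2*g23*b*c.

Definition sq (z : Z) : R := IZR (z*z).

Definition F (g11 g22 g33 g12 g13 g23 : R) (x0 x1 x2 x3 : Z) : R :=
  (g11+g12+g13) * sq (x0-x1) + (g12+g22+g23) * sq (x0-x2) + (g13+g23+g33) * sq (x0-x3)
  + (-g12) * sq (x1-x2) + (-g13) * sq (x1-x3) + (-g23) * sq (x2-x3).

Lemma F_G g11 g22 g33 g12 g13 g23 x0 x1 x2 x3 :
  F g11 g22 g33 g12 g13 g23 x0 x1 x2 x3 =
  G g11 g22 g33 g12 g13 g23 (IZR (x1-x0)) (IZR (x2-x0)) (IZR (x3-x0)).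
Proof. unfold F, G, sq. rewrite !mult_IZR, !minus_IZR. ring. Qed.

Lemma edge_ineq xi xj M ei ej :
  (xi <= M)%Z -> (xj <= M)%Z ->
  ((xi = M /\ ei = 1) \/ (xi <> M /\ ei = 0))%Z ->
  ((xj = M /\ ej = 1) \/ (xj <> M /\ ej = 0))%Z ->
  ((xi-ej*0 - xj)*(xi-xj) >= ((xi-ei)-(xj-ej))*((xi-ei)-(xj-ej)) + (ei-ej)*(ei-ej))%Z.
Proof. intros; destruct H1 as [[? ?]|[? ?]]; destruct H2 as [[? ?]|[? ?]]; subst; nia. Qed.

Lemma sq_edge xi xj M ei ej :
  (xi <= M)%Z -> (xj <= M)%Z ->
  ((xi = M /\ ei = 1) \/ (xi <> M /\ ei = 0))%Z ->
  ((xj = M /\ ej = 1) \/ (xj <> M /\ ej = 0))%Z ->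
  sq ((xi-ei)-(xj-ej)) + sq (ei-ej) <= sq (xi - xj).
Proof.
  intros. unfold sq. rewrite <- plus_IZR. apply IZR_le.
  pose proof (edge_ineq xi xj M ei ej H H0 H1 H2). lia.
Qed.

Lemma Fge8 g11 g22 g33 g12 g13 g23
  (Hmin : forall c1 c2 c3 : Z, ~ (c1 = 0 /\ c2 = 0 /\ c3 = 0)%Z ->
          4 <= G g11 g22 g33 g12 g13 g23 (IZR c1) (IZR c2) (IZR c3))
  (h12 : g12 <= 0) (h13 : g13 <= 0) (h23 : g23 <= 0)
  (h1 : 0 <= g11+g12+g13) (h2 : 0 <= g12+g22+g23) (h3 : 0 <= g13+g23+g33)
  x0 x1 x2 x3 :
  ~ (x0-x1<=1 /\ x1-x0<=1 /\ x0-x2<=1 /\ x2-x0<=1 /\ x0-x3<=1 /\ x3-x0<=1 /\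
     x1-x2<=1 /\ x2-x1<=1 /\ x1-x3<=1 /\ x3-x1<=1 /\ x2-x3<=1 /\ x3-x2<=1)%Z ->
  8 <= F g11 g22 g33 g12 g13 g23 x0 x1 x2 x3.
Proof.
  intros Hn.
  set (M := Z.max (Z.max x0 x1) (Z.max x2 x3)).
  assert (HM0 : (x0 <= M)%Z) by lia. assert (HM1 : (x1 <= M)%Z) by lia.
  assert (HM2 : (x2 <= M)%Z) by lia. assert (HM3 : (x3 <= M)%Z) by lia.
  assert (HMe : (x0 = M \/ x1 = M \/ x2 = M \/ x3 = M)%Z) by lia.
  assert (He : forall x, exists e, ((x = M /\ e = 1) \/ (x <> M /\ e = 0))%Z).
  { intro x. destruct (Z.eq_dec x M); [exists 1%Z|exists 0%Z]; lia. }
  destruct (He x0) as [e0 E0]. destruct (He x1) as [e1 E1].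
  destruct (He x2) as [e2 E2]. destruct (He x3) as [e3 E3].
  assert (Hd : F g11 g22 g33 g12 g13 g23 (x0-e0) (x1-e1) (x2-e2) (x3-e3)
             + F g11 g22 g33 g12 g13 g23 e0 e1 e2 e3
             <= F g11 g22 g33 g12 g13 g23 x0 x1 x2 x3).
  { unfold F.
    pose proof (sq_edge x0 x1 M e0 e1 HM0 HM1 E0 E1).
    pose proof (sq_edge x0 x2 M e0 e2 HM0 HM2 E0 E2).
    pose proof (sq_edge x0 x3 M e0 e3 HM0 HM3 E0 E3).
    pose proof (sq_edge x1 x2 M e1 e2 HM1 HM2 E1 E2).
    pose proof (sq_edge x1 x3 M e1 e3 HM1 HM3 E1 E3).
    pose proof (sq_edge x2 x3 M e2 e3 HM2 HM3 E2 E3).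
    assert (forall q a b, 0 <= q -> a <= b -> q*a <= q*b) by (intros; apply Rmult_le_compat_l; auto).
    pose proof (H5 _ _ _ h1 H). pose proof (H5 _ _ _ h2 H0).
    pose proof (H5 _ _ _ h3 H1).
    pose proof (H5 (-g12) _ _ ltac:(lra) H2).
    pose proof (H5 (-g13) _ _ ltac:(lra) H3).
    pose proof (H5 (-g23) _ _ ltac:(lra) H4).
    lra. }
  rewrite !F_G in Hd.
  assert (A1 : 4 <= G g11 g22 g33 g12 g13 g23 (IZR (x1 - e1 - (x0 - e0))) (IZR (x2 - e2 - (x0 - e0)))
         (IZR (x3 - e3 - (x0 - e0)))) by (apply Hmin; lia).
  assert (A2 : 4 <= G g11 g22 g33 g12 g13 g23 (IZR (e1 - e0)) (IZR (e2 - e0)) (IZR (e3 - e0)))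
    by (apply Hmin; lia).
  rewrite F_G. lra.
Qed.

Definition Qf (a b c : R) := 4*a*a+4*b*b+4*c*c-4*a*c-4*b*c.

Lemma core g11 g22 g33 g12 g13 g23
  (Hmin : forall c1 c2 c3 : Z, ~ (c1 = 0 /\ c2 = 0 /\ c3 = 0)%Z ->
          4 <= G g11 g22 g33 g12 g13 g23 (IZR c1) (IZR c2) (IZR c3))
  (h12 : g12 <= 0) (h13 : g13 <= 0) (h23 : g23 <= 0)
  (h1 : 0 <= g11+g12+g13) (h2 : 0 <= g12+g22+g23) (h3 : 0 <= g13+g23+g33)
  (hbad : 4 < g11 + g22 + 2*g12)
  (c1 c2 c3 : Z) :
  G g11 g22 g33 g12 g13 g23 (IZR c1) (IZR c2) (IZR c3) = 4 ->
  Qf (IZR c1) (IZR c2) (IZR c3) = 4.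
Proof.
  intros HG.
  assert (Hr : (0-c1<=1 /\ c1-0<=1 /\ 0-c2<=1 /\ c2-0<=1 /\ 0-c3<=1 /\ c3-0<=1 /\
     c1-c2<=1 /\ c2-c1<=1 /\ c1-c3<=1 /\ c3-c1<=1 /\ c2-c3<=1 /\ c3-c2<=1)%Z).
  { apply NNPP; intro Hn.
    pose proof (Fge8 _ _ _ _ _ _ Hmin h12 h13 h23 h1 h2 h3 0 c1 c2 c3 Hn).
    rewrite F_G in H. rewrite !Z.sub_0_r in H. lra. }
  assert (E1 : (c1 = -1 \/ c1 = 0 \/ c1 = 1)%Z) by lia.
  assert (E2 : (c2 = -1 \/ c2 = 0 \/ c2 = 1)%Z) by lia.
  assert (E3 : (c3 = -1 \/ c3 = 0 \/ c3 = 1)%Z) by lia.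
  unfold G in HG; unfold Qf.
  destruct E1 as [ -> | [ -> | -> ] ]; destruct E2 as [ -> | [ -> | -> ] ]; destruct E3 as [ -> | [ -> | -> ] ];
    try lia; lra.
Qed.

Definition dot (x y : vec) : R :=
  let '(x1, x2, x3) := x in let '(y1, y2, y3) := y in x1*y1 + x2*y2 + x3*y3.
Definition nrm (x : vec) : R := dot x x.
Definition vsub (x y : vec) : vec :=
  let '(x1, x2, x3) := x in let '(y1, y2, y3) := y in (x1 - y1, x2 - y2, x3 - y3).
Definition vneg (x : vec) : vec := let '(x1, x2, x3) := x in (-x1, -x2, -x3).
Definition cross (x y : vec) : vec :=
  let '(x1, x2, x3) := x in let '(y1, y2, y3) := y in
  (x2*y3 - x3*y2, x3*y1 - x1*y3, x1*y2 - x2*y1).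

Ltac dv := repeat match goal with
  | v : vec |- _ => let a := fresh "a" in let b := fresh "b" in let c := fresh "c" in
       destruct v as [[a b] c] end.

Lemma edist_nrm x y : edist x y = sqrt (nrm (vsub x y)).
Proof. dv; unfold edist, nrm, dot, vsub; f_equal; ring. Qed.

Lemma nrm_nonneg x : 0 <= nrm x.
Proof. dv; unfold nrm, dot; nra. Qed.

Lemma sqrt_eq2 X : sqrt X = 2 -> X = 4.
Proof.
  intro H. destruct (Rle_dec 0 X).
  - rewrite <- (sqrt_sqrt X r), H. ring.
  - rewrite sqrt_neg_0 in H; lra.
Qed.

Lemma eq2_sqrt X : X = 4 -> sqrt X = 2.
Proof. intros ->. replace 4 with (2*2) by ring. rewrite sqrt_square; lra. Qed.

Lemma le2_sqrt X : 0 <= X -> 2 <= sqrt X -> 4 <= X.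
Proof. intros H H'. rewrite <- (sqrt_sqrt X H). nra. Qed.

Lemma sqrt_le2 X : 4 <= X -> 2 <= sqrt X.
Proof. intros H. replace 2 with (sqrt 4). apply sqrt_le_1_alt; lra.
  replace 4 with (2*2) by ring. rewrite sqrt_square; lra. Qed.

Lemma zcomb_sub a b c a' b' c' u1 u2 u3 :
  vsub (zcomb a b c u1 u2 u3) (zcomb a' b' c' u1 u2 u3) = zcomb (a-a') (b-b') (c-c') u1 u2 u3.
Proof. dv; unfold zcomb, comb, vadd, vscale, vsub. rewrite !minus_IZR. f_equal; [f_equal|]; ring. Qed.

Lemma zcomb_add a b c a' b' c' u1 u2 u3 :
  zcomb (a+a') (b+b') (c+c') u1 u2 u3 = vadd (zcomb a b c u1 u2 u3) (zcomb a' b' c' u1 u2 u3).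
Proof. dv; unfold zcomb, comb, vadd, vscale. rewrite !plus_IZR. f_equal; [f_equal|]; ring. Qed.

Lemma zcomb_opp a b c u1 u2 u3 :
  zcomb (-a) (-b) (-c) u1 u2 u3 = vneg (zcomb a b c u1 u2 u3).
Proof. dv; unfold zcomb, comb, vadd, vscale, vneg. rewrite !opp_IZR. f_equal; [f_equal|]; ring. Qed.

Lemma nrm_zcomb a b c v1 v2 v3 :
  nrm (zcomb a b c v1 v2 v3) =
  G (dot v1 v1) (dot v2 v2) (dot v3 v3) (dot v1 v2) (dot v1 v3) (dot v2 v3) (IZR a) (IZR b) (IZR c).
Proof. dv; unfold zcomb, comb, vadd, vscale, nrm, dot, G. ring. Qed.

Lemma zcomb_zero u1 u2 u3 : zcomb 0 0 0 u1 u2 u3 = vzero.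
Proof. dv; unfold zcomb, comb, vadd, vscale, vzero. f_equal; [f_equal|]; ring. Qed.

Lemma min_coords L u1 u2 u3 :
  lattice_basis L u1 u2 u3 -> (forall x, L x -> x <> vzero -> 2 <= edist x vzero) ->
  forall c1 c2 c3 : Z, ~ (c1 = 0 /\ c2 = 0 /\ c3 = 0)%Z ->
  4 <= nrm (zcomb c1 c2 c3 u1 u2 u3).
Proof.
  intros [Hli Hsp] Hm c1 c2 c3 Hc.
  assert (HL : L (zcomb c1 c2 c3 u1 u2 u3)) by (apply Hsp; eauto).
  assert (Hnz : zcomb c1 c2 c3 u1 u2 u3 <> vzero).
  { intro E. destruct (Hli _ _ _ E) as [? [? ?]]. apply Hc.
    split; [|split]; apply eq_IZR; auto. }
  pose proof (Hm _ HL Hnz). rewrite edist_nrm in H.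
  replace (vsub (zcomb c1 c2 c3 u1 u2 u3) vzero) with (zcomb c1 c2 c3 u1 u2 u3) in H.
  - apply le2_sqrt; auto. apply nrm_nonneg.
  - unfold vzero. generalize (zcomb c1 c2 c3 u1 u2 u3). intro v; dv; simpl. f_equal; [f_equal|]; ring.
Qed.

Lemma vec_ext (a b c d e f : R) : a = d -> b = e -> c = f -> ((a,b,c) : vec) = (d,e,f).
Proof. intros -> -> ->; reflexivity. Qed.

Definition det3 (u1 u2 u3 : vec) := dot u1 (cross u2 u3).

Lemma cramer w u1 u2 u3 :
  comb (dot w (cross u2 u3)) (dot w (cross u3 u1)) (dot w (cross u1 u2)) u1 u2 u3
  = vscale (det3 u1 u2 u3) w.
Proof. dv; unfold comb, vadd, vscale, dot, cross, det3; cbn; apply vec_ext; ring. Qed.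

Lemma nrm0 x : nrm x = 0 -> x = vzero.
Proof. dv; unfold nrm, dot, vzero; intro H.
  assert (a = 0) by nra. assert (b = 0) by nra. assert (c = 0) by nra. subst; reflexivity. Qed.

Lemma det_nz u1 u2 u3 : lin_indep u1 u2 u3 -> det3 u1 u2 u3 <> 0.
Proof.
  intros Hli HD.
  assert (Hn : forall w, comb (dot w (cross u2 u3)) (dot w (cross u3 u1)) (dot w (cross u1 u2)) u1 u2 u3 = vzero).
  { intro w. rewrite cramer, HD. unfold vscale, vzero; dv; cbn; cbn; apply vec_ext; ring. }
  destruct (Hli _ _ _ (Hn (cross u2 u3))) as [H1 _].
  destruct (Hli _ _ _ (Hn (cross u3 u1))) as [_ [H2 _]].
  destruct (Hli _ _ _ (Hn (cross u1 u2))) as [_ [_ H3]].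
  apply nrm0 in H1. apply nrm0 in H2. apply nrm0 in H3.
  assert (E : comb (dot u1 u2) (- nrm u1) 0 u1 u2 u3 = vzero).
  { clear -H3. revert H3. unfold comb, vadd, vscale, vzero, nrm, dot, cross. dv. intro H3.
    cbn in H3. injection H3; intros. cbn. apply vec_ext.
    - transitivity (b1*(a1 * b0 - b1 * a0) - c1*(c1 * a0 - a1 * c0)); [ring| rewrite H, H0; ring].
    - transitivity (c1*(b1 * c0 - c1 * b0) - a1*(a1 * b0 - b1 * a0)); [ring| rewrite H, H1; ring].
    - transitivity (a1*(c1 * a0 - a1 * c0) - b1*(b1 * c0 - c1 * b0)); [ring| rewrite H0, H1; ring]. }
  destruct (Hli _ _ _ E) as [_ [E2 _]].
  assert (E1 : nrm u1 = 0) by lra. apply nrm0 in E1.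
  assert (E3 : comb 1 0 0 u1 u2 u3 = vzero).
  { rewrite <- E1. unfold comb, vadd, vscale, vzero; dv; cbn; cbn; apply vec_ext; ring. }
  destruct (Hli _ _ _ E3). lra.
Qed.

Lemma lagrange x n : (dot x n)^2 <= nrm x * nrm n.
Proof.
  assert (nrm x * nrm n - (dot x n)^2 = nrm (cross x n)).
  { dv; unfold nrm, dot, cross; ring. }
  pose proof (nrm_nonneg (cross x n)). lra.
Qed.

Lemma coord_bound u1 u2 u3 t1 t2 t3 :
  let x := zcomb t1 t2 t3 u1 u2 u3 in
  let D := det3 u1 u2 u3 in
  (IZR t1)^2 * D^2 <= nrm x * nrm (cross u2 u3) /\
  (IZR t2)^2 * D^2 <= nrm x * nrm (cross u3 u1) /\
  (IZR t3)^2 * D^2 <= nrm x * nrm (cross u1 u2).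
Proof.
  intros x D.
  assert (E1 : dot x (cross u2 u3) = IZR t1 * D).
  { subst x D; unfold zcomb, comb, vadd, vscale, dot, cross, det3; dv; cbn; ring. }
  assert (E2 : dot x (cross u3 u1) = IZR t2 * D).
  { subst x D; unfold zcomb, comb, vadd, vscale, dot, cross, det3; dv; cbn; ring. }
  assert (E3 : dot x (cross u1 u2) = IZR t3 * D).
  { subst x D; unfold zcomb, comb, vadd, vscale, dot, cross, det3; dv; cbn; ring. }
  pose proof (lagrange x (cross u2 u3)). pose proof (lagrange x (cross u3 u1)).
  pose proof (lagrange x (cross u1 u2)).
  rewrite E1 in H. rewrite E2 in H0. rewrite E3 in H1.
  split; [|split]; nra.
Qed.

Definition row := (Z*Z*Z)%type.
Definition mat := (row*row*row)%type.
Definition bv (u1 u2 u3 : vec) (r : row) : vec := let '(a,b,c) := r in zcomb a b c u1 u2 u3.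
Definition radd (r s : row) : row :=
  let '(a,b,c) := r in let '(a',b',c') := s in ((a+a')%Z,(b+b')%Z,(c+c')%Z).
Definition ropp (r : row) : row := let '(a,b,c) := r in ((-a)%Z,(-b)%Z,(-c)%Z).

Lemma bv_add u1 u2 u3 r s : bv u1 u2 u3 (radd r s) = vadd (bv u1 u2 u3 r) (bv u1 u2 u3 s).
Proof. destruct r as [[a b] c]; destruct s as [[a' b'] c']; simpl. apply zcomb_add. Qed.
Lemma bv_opp u1 u2 u3 r : bv u1 u2 u3 (ropp r) = vneg (bv u1 u2 u3 r).
Proof. destruct r as [[a b] c]; simpl. apply zcomb_opp. Qed.

Definition detZ (T : mat) : Z :=
  let '((a1,a2,a3),(b1,b2,b3),(c1,c2,c3)) := T in
  (a1*(b2*c3-b3*c2) - a2*(b1*c3-b3*c1) + a3*(b1*c2-b2*c1))%Z.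

Definition S4 (b1 b2 b3 : vec) := nrm b1 + nrm b2 + nrm b3 + nrm (vadd (vadd b1 b2) b3).
Definition SS u1 u2 u3 (T : mat) : R :=
  let '(r1,r2,r3) := T in S4 (bv u1 u2 u3 r1) (bv u1 u2 u3 r2) (bv u1 u2 u3 r3).

Ltac vring := dv; unfold S4, nrm, dot, vadd, vneg; cbn; ring.

Lemma S10 b1 b2 b3 : S4 (vneg b1) (vadd b2 b1) (vadd b3 b1) = S4 b1 b2 b3 + 2*(nrm b1 + dot b1 b2 + dot b1 b3).
Proof. vring. Qed.
Lemma S20 b1 b2 b3 : S4 (vadd b1 b2) (vneg b2) (vadd b3 b2) = S4 b1 b2 b3 + 2*(nrm b2 + dot b1 b2 + dot b2 b3).
Proof. vring. Qed.
Lemma S30 b1 b2 b3 : S4 (vadd b1 b3) (vadd b2 b3) (vneg b3) = S4 b1 b2 b3 + 2*(nrm b3 + dot b1 b3 + dot b2 b3).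
Proof. vring. Qed.
Lemma S12 b1 b2 b3 : S4 (vneg b1) b2 (vadd b3 b1) = S4 b1 b2 b3 - 2*dot b1 b2.
Proof. vring. Qed.
Lemma S13 b1 b2 b3 : S4 (vneg b1) (vadd b2 b1) b3 = S4 b1 b2 b3 - 2*dot b1 b3.
Proof. vring. Qed.
Lemma S23 b1 b2 b3 : S4 (vadd b1 b2) (vneg b2) b3 = S4 b1 b2 b3 - 2*dot b2 b3.
Proof. vring. Qed.

Ltac dm := repeat match goal with
  | T : mat |- _ => destruct T as [[? ?] ?]
  | r : row |- _ => let a := fresh "z" in let b := fresh "z" in let c := fresh "z" in destruct r as [[a b] c] end.

Definition m10 (T : mat) : mat := let '(r1,r2,r3) := T in (ropp r1, radd r2 r1, radd r3 r1).
Definition m20 (T : mat) : mat := let '(r1,r2,r3) := T in (radd r1 r2, ropp r2, radd r3 r2).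
Definition m30 (T : mat) : mat := let '(r1,r2,r3) := T in (radd r1 r3, radd r2 r3, ropp r3).
Definition m12 (T : mat) : mat := let '(r1,r2,r3) := T in (ropp r1, r2, radd r3 r1).
Definition m13 (T : mat) : mat := let '(r1,r2,r3) := T in (ropp r1, radd r2 r1, r3).
Definition m23 (T : mat) : mat := let '(r1,r2,r3) := T in (radd r1 r2, ropp r2, r3).

Ltac detring := intros; dm; unfold m10, m20, m30, m12, m13, m23, detZ, radd, ropp; cbn; ring.
Lemma d10 T : detZ (m10 T) = (- detZ T)%Z. Proof. detring. Qed.
Lemma d20 T : detZ (m20 T) = (- detZ T)%Z. Proof. detring. Qed.
Lemma d30 T : detZ (m30 T) = (- detZ T)%Z. Proof. detring. Qed.
Lemma d12 T : detZ (m12 T) = (- detZ T)%Z. Proof. detring. Qed.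
Lemma d13 T : detZ (m13 T) = (- detZ T)%Z. Proof. detring. Qed.
Lemma d23 T : detZ (m23 T) = (- detZ T)%Z. Proof. detring. Qed.

Definition bvs u1 u2 u3 (T : mat) : vec * vec * vec :=
  let '(r1,r2,r3) := T in (bv u1 u2 u3 r1, bv u1 u2 u3 r2, bv u1 u2 u3 r3).

Ltac sring L := intros; dm; unfold SS, m10, m20, m30, m12, m13, m23; cbn [bvs];
  rewrite ?bv_add, ?bv_opp; apply L.
Lemma s10 u1 u2 u3 T : let '(b1,b2,b3) := bvs u1 u2 u3 T in
  SS u1 u2 u3 (m10 T) = SS u1 u2 u3 T + 2*(nrm b1 + dot b1 b2 + dot b1 b3).
Proof. sring S10. Qed.
Lemma s20 u1 u2 u3 T : let '(b1,b2,b3) := bvs u1 u2 u3 T in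
  SS u1 u2 u3 (m20 T) = SS u1 u2 u3 T + 2*(nrm b2 + dot b1 b2 + dot b2 b3).
Proof. sring S20. Qed.
Lemma s30 u1 u2 u3 T : let '(b1,b2,b3) := bvs u1 u2 u3 T in
  SS u1 u2 u3 (m30 T) = SS u1 u2 u3 T + 2*(nrm b3 + dot b1 b3 + dot b2 b3).
Proof. sring S30. Qed.
Lemma s12 u1 u2 u3 T : let '(b1,b2,b3) := bvs u1 u2 u3 T in
  SS u1 u2 u3 (m12 T) = SS u1 u2 u3 T - 2*dot b1 b2.
Proof. sring S12. Qed.
Lemma s13 u1 u2 u3 T : let '(b1,b2,b3) := bvs u1 u2 u3 T in
  SS u1 u2 u3 (m13 T) = SS u1 u2 u3 T - 2*dot b1 b3.
Proof. sring S13. Qed.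
Lemma s23 u1 u2 u3 T : let '(b1,b2,b3) := bvs u1 u2 u3 T in
  SS u1 u2 u3 (m23 T) = SS u1 u2 u3 T - 2*dot b2 b3.
Proof. sring S23. Qed.

Lemma argmin {A : Type} (f : A -> R) (l : list A) :
  l <> nil -> exists x, In x l /\ forall y, In y l -> f x <= f y.
Proof.
  induction l as [|a l IH]; intros Hn; [congruence|].
  destruct l as [|b l'].
  - exists a; split; [left; auto|]. intros y [<-|[]]; lra.
  - destruct IH as [m [Hm Hmin]]; [discriminate|].
    destruct (Rle_dec (f a) (f m)).
    + exists a; split; [left; auto|]. intros y [<-|Hy]; [lra|]. specialize (Hmin y Hy); lra.
    + exists m; split; [right; auto|]. intros y [<-|Hy]; [lra|]. auto.
Qed.

Definition zl (N : Z) : list Z := map (fun k : nat => (Z.of_nat k - N)%Z) (seq 0 (Z.to_nat (2*N+1))).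

Lemma in_zl N z : (-N <= z <= N)%Z -> In z (zl N).
Proof.
  intros H. unfold zl. apply in_map_iff. exists (Z.to_nat (z + N)). split.
  - rewrite Z2Nat.id; lia.
  - apply in_seq. lia.
Qed.

Definition rl N : list row := list_prod (list_prod (zl N) (zl N)) (zl N).
Definition ml N : list mat := list_prod (list_prod (rl N) (rl N)) (rl N).

Definition inbox N (r : row) := let '(a,b,c) := r in
  (-N <= a <= N /\ -N <= b <= N /\ -N <= c <= N)%Z.

Lemma in_rl N r : inbox N r -> In r (rl N).
Proof. destruct r as [[a b] c]; intros [? [? ?]]. unfold rl. repeat apply in_prod; apply in_zl; auto. Qed.

Lemma in_ml N (T : mat) : (let '(r1,r2,r3) := T in inbox N r1 /\ inbox N r2 /\ inbox N r3) -> In T (ml N).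
Proof. destruct T as [[r1 r2] r3]; intros [? [? ?]]. unfold ml. repeat apply in_prod; apply in_rl; auto. Qed.

Definition fl N := filter (fun T => Z.eqb (Z.abs (detZ T)) 1) (ml N).

Definition Tid : mat := ((1,0,0),(0,1,0),(0,0,1))%Z.

Lemma S4_ge b1 b2 b3 : nrm b1 <= S4 b1 b2 b3 /\ nrm b2 <= S4 b1 b2 b3 /\ nrm b3 <= S4 b1 b2 b3.
Proof.
  unfold S4. pose proof (nrm_nonneg b1). pose proof (nrm_nonneg b2). pose proof (nrm_nonneg b3).
  pose proof (nrm_nonneg (vadd (vadd b1 b2) b3)). lra.
Qed.

Lemma row_bound u1 u2 u3 (S0 : R) : lin_indep u1 u2 u3 ->
  exists N : Z, forall r : row, nrm (bv u1 u2 u3 r) <= S0 -> inbox N r.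
Proof.
  intros Hli. pose proof (det_nz _ _ _ Hli) as HD.
  set (D := det3 u1 u2 u3) in *.
  set (K := Rabs S0 * (nrm (cross u2 u3) + nrm (cross u3 u1) + nrm (cross u1 u2)) / (D^2)).
  exists (up K). intros [[a b] c] Hr. simpl in Hr.
  destruct (coord_bound u1 u2 u3 a b c) as [B1 [B2 B3]]. cbv zeta in B1, B2, B3.
  pose proof (nrm_nonneg (cross u2 u3)). pose proof (nrm_nonneg (cross u3 u1)).
  pose proof (nrm_nonneg (cross u1 u2)).
  assert (HD2 : 0 < D^2) by (simpl; rewrite Rmult_1_r; apply Rsqr_pos_lt; auto).
  assert (Hup : K < IZR (up K)) by apply archimed.
  assert (HS : nrm (zcomb a b c u1 u2 u3) <= Rabs S0) by (pose proof (Rle_abs S0); lra).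
  pose proof (Rabs_pos S0).
  assert (key : forall t : Z, (IZR t)^2 * D^2 <= nrm (zcomb a b c u1 u2 u3) * (nrm (cross u2 u3) + nrm (cross u3 u1) + nrm (cross u1 u2)) -> (- up K <= t <= up K)%Z).
  { intros t Ht.
    assert (Ht2 : (IZR t)^2 * D^2 <= K * D^2).
    { replace (K * D^2) with (Rabs S0 * (nrm (cross u2 u3) + nrm (cross u3 u1) + nrm (cross u1 u2)))
        by (unfold K; field; auto).
      apply Rle_trans with (1 := Ht).
      apply Rmult_le_compat_r; [lra|]. exact HS. }
    assert (Ht3 : (IZR t)^2 <= K) by (apply Rmult_le_reg_r with (D^2); lra).
    assert (Ht4 : IZR (t*t) < IZR (up K)) by (rewrite mult_IZR; simpl in Ht3; lra).
    apply lt_IZR in Ht4. nia. }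
  pose proof (nrm_nonneg (zcomb a b c u1 u2 u3)).
  split; [|split]; apply key.
  - apply Rle_trans with (1 := B1). apply Rmult_le_compat_l; lra.
  - apply Rle_trans with (1 := B2). apply Rmult_le_compat_l; lra.
  - apply Rle_trans with (1 := B3). apply Rmult_le_compat_l; lra.
Qed.

Lemma obtuse_exists u1 u2 u3 : lin_indep u1 u2 u3 ->
  exists r1 r2 r3 : row, Z.abs (detZ (r1,r2,r3)) = 1%Z /\
  let b1 := bv u1 u2 u3 r1 in let b2 := bv u1 u2 u3 r2 in let b3 := bv u1 u2 u3 r3 in
  dot b1 b2 <= 0 /\ dot b1 b3 <= 0 /\ dot b2 b3 <= 0 /\
  0 <= nrm b1 + dot b1 b2 + dot b1 b3 /\ 0 <= nrm b2 + dot b1 b2 + dot b2 b3 /\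
  0 <= nrm b3 + dot b1 b3 + dot b2 b3.
Proof.
  intros Hli.
  set (S0 := SS u1 u2 u3 Tid).
  destruct (row_bound u1 u2 u3 S0 Hli) as [N HN].
  assert (Hbox : forall T, SS u1 u2 u3 T <= S0 -> In T (ml N)).
  { intros [[r1 r2] r3] H. apply in_ml. simpl in H.
    destruct (S4_ge (bv u1 u2 u3 r1) (bv u1 u2 u3 r2) (bv u1 u2 u3 r3)) as [? [? ?]].
    split; [|split]; apply HN; lra. }
  assert (Hfl : forall T, Z.abs (detZ T) = 1%Z -> SS u1 u2 u3 T <= S0 -> In T (fl N)).
  { intros T Hd HS. unfold fl. apply filter_In. split; [auto|]. rewrite Hd. reflexivity. }
  assert (Hid : In Tid (fl N)) by (apply Hfl; [reflexivity| unfold S0; lra]).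
  destruct (argmin (SS u1 u2 u3) (fl N)) as [T [HT Hmin]].
  { intro E. rewrite E in Hid. destruct Hid. }
  unfold fl in HT. apply filter_In in HT as [_ HT]. apply Z.eqb_eq in HT.
  assert (HT0 : SS u1 u2 u3 T <= S0) by (apply Hmin; auto).
  assert (Hm : forall T', Z.abs (detZ T') = 1%Z -> SS u1 u2 u3 T' < SS u1 u2 u3 T -> False).
  { intros T' Hd Hlt. assert (In T' (fl N)) by (apply Hfl; auto; lra).
    specialize (Hmin _ H). lra. }
  destruct T as [[r1 r2] r3].
  exists r1, r2, r3. split; [exact HT|].
  pose proof (s10 u1 u2 u3 (r1,r2,r3)). pose proof (s20 u1 u2 u3 (r1,r2,r3)).
  pose proof (s30 u1 u2 u3 (r1,r2,r3)). pose proof (s12 u1 u2 u3 (r1,r2,r3)).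
  pose proof (s13 u1 u2 u3 (r1,r2,r3)). pose proof (s23 u1 u2 u3 (r1,r2,r3)).
  cbn [bvs] in *.
  assert (A : forall T', detZ T' = (- detZ (r1,r2,r3))%Z -> Z.abs (detZ T') = 1%Z)
    by (intros T' E; rewrite E, Z.abs_opp; auto).
  repeat split; apply Rnot_lt_le; intro Hc.
  - apply (Hm (m12 (r1,r2,r3))); [apply A, d12| lra].
  - apply (Hm (m13 (r1,r2,r3))); [apply A, d13| lra].
  - apply (Hm (m23 (r1,r2,r3))); [apply A, d23| lra].
  - apply (Hm (m10 (r1,r2,r3))); [apply A, d10| lra].
  - apply (Hm (m20 (r1,r2,r3))); [apply A, d20| lra].
  - apply (Hm (m30 (r1,r2,r3))); [apply A, d30| lra].
Qed.

Ltac izr := repeat (rewrite minus_IZR || rewrite plus_IZR || rewrite mult_IZR || rewrite opp_IZR).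

Lemma comb_bv u1 u2 u3 x1 x2 x3 y1 y2 y3 z1 z2 z3 a1 a2 a3 :
  comb a1 a2 a3 (bv u1 u2 u3 (x1,x2,x3)) (bv u1 u2 u3 (y1,y2,y3)) (bv u1 u2 u3 (z1,z2,z3)) =
  comb (a1*IZR x1 + a2*IZR y1 + a3*IZR z1) (a1*IZR x2 + a2*IZR y2 + a3*IZR z2)
       (a1*IZR x3 + a2*IZR y3 + a3*IZR z3) u1 u2 u3.
Proof. dv. unfold bv, zcomb, comb, vadd, vscale; cbn; apply vec_ext; ring. Qed.

Lemma unimod_basis L u1 u2 u3 (r1 r2 r3 : row) :
  lattice_basis L u1 u2 u3 -> Z.abs (detZ (r1,r2,r3)) = 1%Z ->
  lattice_basis L (bv u1 u2 u3 r1) (bv u1 u2 u3 r2) (bv u1 u2 u3 r3).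
Proof.
  intros [Hli Hsp] Hd.
  destruct r1 as [[x1 x2] x3]; destruct r2 as [[y1 y2] y3]; destruct r3 as [[z1 z2] z3].
  match type of Hd with Z.abs ?D = _ => set (d := D) in * end.
  assert (Hdd : (d * d = 1)%Z) by (rewrite <- Z.abs_square, Hd; reflexivity).
  assert (HdR : IZR d <> 0) by (intro E; apply eq_IZR in E; rewrite E in Hdd; discriminate).
  split.
  - intros a1 a2 a3 E. rewrite comb_bv in E.
    destruct (Hli _ _ _ E) as [s1 [s2 s3]].
    assert (E1 : a1 * IZR d = (a1*IZR x1 + a2*IZR y1 + a3*IZR z1) * IZR (y2*z3-y3*z2)
        - (a1*IZR x2 + a2*IZR y2 + a3*IZR z2) * IZR (y1*z3-y3*z1)
        + (a1*IZR x3 + a2*IZR y3 + a3*IZR z3) * IZR (y1*z2-y2*z1)).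
    { unfold d, detZ. cbv beta iota. izr. ring. }
    assert (E2 : a2 * IZR d = - (a1*IZR x1 + a2*IZR y1 + a3*IZR z1) * IZR (x2*z3-x3*z2)
        + (a1*IZR x2 + a2*IZR y2 + a3*IZR z2) * IZR (x1*z3-x3*z1)
        - (a1*IZR x3 + a2*IZR y3 + a3*IZR z3) * IZR (x1*z2-x2*z1)).
    { unfold d, detZ. cbv beta iota. izr. ring. }
    assert (E3 : a3 * IZR d = (a1*IZR x1 + a2*IZR y1 + a3*IZR z1) * IZR (x2*y3-x3*y2)
        - (a1*IZR x2 + a2*IZR y2 + a3*IZR z2) * IZR (x1*y3-x3*y1)
        + (a1*IZR x3 + a2*IZR y3 + a3*IZR z3) * IZR (x1*y2-x2*y1)).
    { unfold d, detZ. cbv beta iota. izr. ring. }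
    rewrite s1, s2, s3 in E1, E2, E3.
    split; [|split]; apply (Rmult_eq_reg_r (IZR d)); auto; lra.
  - intros x. rewrite Hsp. split.
    + intros [n1 [n2 [n3 ->]]].
      exists (d*(n1*(y2*z3-y3*z2) - n2*(y1*z3-y3*z1) + n3*(y1*z2-y2*z1)))%Z,
             (d*(-n1*(x2*z3-x3*z2) + n2*(x1*z3-x3*z1) - n3*(x1*z2-x2*z1)))%Z,
             (d*(n1*(x2*y3-x3*y2) - n2*(x1*y3-x3*y1) + n3*(x1*y2-x2*y1)))%Z.
      unfold zcomb at 2. rewrite comb_bv. unfold zcomb. rewrite <- !mult_IZR, <- !plus_IZR.
      f_equal; f_equal.
      * transitivity (d*d*n1)%Z; [rewrite Hdd; ring|]. unfold d, detZ; cbv beta iota; ring.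
      * transitivity (d*d*n2)%Z; [rewrite Hdd; ring|]. unfold d, detZ; cbv beta iota; ring.
      * transitivity (d*d*n3)%Z; [rewrite Hdd; ring|]. unfold d, detZ; cbv beta iota; ring.
    + intros [m1 [m2 [m3 ->]]].
      exists (m1*x1+m2*y1+m3*z1)%Z, (m1*x2+m2*y2+m3*z2)%Z, (m1*x3+m2*y3+m3*z3)%Z.
      unfold zcomb at 1. rewrite comb_bv. unfold zcomb. rewrite <- !mult_IZR, <- !plus_IZR. reflexivity.
Qed.

Definition W1 : vec := (sqrt 2, sqrt 2, 0).
Definition W2 : vec := (sqrt 2, - sqrt 2, 0).
Definition W3 : vec := (- sqrt 2, 0, - sqrt 2).

Lemma s2pos : 0 < sqrt 2.
Proof. apply sqrt_lt_R0; lra. Qed.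
Lemma s2sq : sqrt 2 * sqrt 2 = 2.
Proof. apply sqrt_sqrt; lra. Qed.

Lemma fcc_basis : lattice_basis Lambda_fcc W1 W2 W3.
Proof.
  pose proof s2pos. split.
  - intros a b c E. unfold comb, vadd, vscale, W1, W2, W3, vzero in E. cbn in E.
    injection E; intros E3 E2 E1.
    assert (c = 0) by nra. subst c. assert (a = b) by nra. subst. assert (b = 0) by nra. lra.
  - intros x. unfold Lambda_fcc. split.
    + intros [a [b [c ->]]]. exists a, (-c)%Z, (-b-c)%Z.
      unfold zcomb, comb, vadd, vscale, W1, W2, W3, fcc1, fcc2, fcc3. izr. cbn. apply vec_ext; ring.
    + intros [a [b [c ->]]]. exists a, (b-c)%Z, (-b)%Z.
      unfold zcomb, comb, vadd, vscale, W1, W2, W3, fcc1, fcc2, fcc3. izr. cbn. apply vec_ext; ring.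
Qed.

Lemma nrm_W a b c : nrm (zcomb a b c W1 W2 W3) = Qf (IZR a) (IZR b) (IZR c).
Proof.
  unfold nrm, dot, zcomb, comb, vadd, vscale, W1, W2, W3, Qf. cbn.
  transitivity (sqrt 2 * sqrt 2 * ((IZR a + IZR b - IZR c)^2 + (IZR a - IZR b)^2 + (IZR c)^2)).
  - ring.
  - rewrite s2sq. ring.
Qed.

Lemma Qf_ge a b c : ~ (a = 0 /\ b = 0 /\ c = 0)%Z -> 4 <= Qf (IZR a) (IZR b) (IZR c).
Proof.
  intros H.
  assert (HZ : (2 <= (a+b-c)*(a+b-c) + (a-b)*(a-b) + c*c)%Z).
  { remember (a+b-c)%Z as A. remember (a-b)%Z as B.
    assert (HAB : (A + B + c = 2*a)%Z) by lia.
    assert (HN : ~ (A = 0 /\ B = 0 /\ c = 0)%Z) by lia.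
    clear HeqA HeqB H.
    destruct (Z_le_gt_dec 2 (A*A + B*B + c*c)); auto. exfalso.
    assert (0 <= A*A)%Z by nia. assert (0 <= B*B)%Z by nia. assert (0 <= c*c)%Z by nia.
    assert (-1 <= A <= 1)%Z by nia. assert (-1 <= B <= 1)%Z by nia.
    assert (-1 <= c <= 1)%Z by nia.
    assert (Ha : (A = -1 \/ A = 0 \/ A = 1)%Z) by lia.
    assert (Hb : (B = -1 \/ B = 0 \/ B = 1)%Z) by lia.
    assert (Hc : (c = -1 \/ c = 0 \/ c = 1)%Z) by lia.
    destruct Ha as [Ha|[Ha|Ha]]; destruct Hb as [Hb|[Hb|Hb]]; destruct Hc as [Hc|[Hc|Hc]];
      subst; lia. }
  apply IZR_le in HZ. assert (E : Qf (IZR a) (IZR b) (IZR c) = 2 * IZR ((a+b-c)*(a+b-c) + (a-b)*(a-b) + c*c)) by (unfold Qf; izr; ring). lra.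
Qed.

Lemma fcc_min x : Lambda_fcc x -> x <> vzero -> 2 <= edist x vzero.
Proof.
  intros Hx Hnz. apply (proj2 fcc_basis) in Hx. destruct Hx as [a [b [c ->]]].
  assert (Hn : ~ (a = 0 /\ b = 0 /\ c = 0)%Z).
  { intros [-> [-> ->]]. apply Hnz. apply zcomb_zero. }
  rewrite edist_nrm. replace (vsub (zcomb a b c W1 W2 W3) vzero) with (zcomb a b c W1 W2 W3).
  - apply sqrt_le2. rewrite nrm_W. apply Qf_ge; auto.
  - generalize (zcomb a b c W1 W2 W3). intro v. dv. unfold vsub, vzero. cbn. apply vec_ext; ring.
Qed.

Lemma dot_comm x y : dot x y = dot y x.
Proof. dv; unfold dot; cbn; ring. Qed.

Lemma lb_swap23 L a b c : lattice_basis L a b c -> lattice_basis L a c b.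
Proof.
  intros [Hli Hsp]. split.
  - intros x y z E. assert (E' : comb x z y a b c = vzero).
    { rewrite <- E. unfold comb, vadd, vscale; dv; cbn; apply vec_ext; ring. }
    destruct (Hli _ _ _ E') as [? [? ?]]; auto.
  - intros p. rewrite Hsp. split; intros [x [y [z ->]]]; exists x, z, y;
      unfold zcomb, comb, vadd, vscale; dv; cbn; apply vec_ext; ring.
Qed.

Lemma lb_rot L a b c : lattice_basis L a b c -> lattice_basis L b c a.
Proof.
  intros [Hli Hsp]. split.
  - intros x y z E. assert (E' : comb z x y a b c = vzero).
    { rewrite <- E. unfold comb, vadd, vscale; dv; cbn; apply vec_ext; ring. }
    destruct (Hli _ _ _ E') as [? [? ?]]; auto.
  - intros p. rewrite Hsp. split; intros [x [y [z ->]]].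
    + exists y, z, x; unfold zcomb, comb, vadd, vscale; dv; cbn; apply vec_ext; ring.
    + exists z, x, y; unfold zcomb, comb, vadd, vscale; dv; cbn; apply vec_ext; ring.
Qed.

Lemma finish L v1 v2 v3 :
  lattice_basis L v1 v2 v3 -> (forall x, L x -> x <> vzero -> 2 <= edist x vzero) ->
  dot v1 v2 <= 0 -> dot v1 v3 <= 0 -> dot v2 v3 <= 0 ->
  0 <= nrm v1 + dot v1 v2 + dot v1 v3 -> 0 <= nrm v2 + dot v1 v2 + dot v2 v3 ->
  0 <= nrm v3 + dot v1 v3 + dot v2 v3 ->
  4 < nrm v1 + nrm v2 + 2 * dot v1 v2 ->
  forall a b c : Z, nrm (zcomb a b c v1 v2 v3) = 4 -> Qf (IZR a) (IZR b) (IZR c) = 4.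
Proof.
  intros Hb Hm h12 h13 h23 h1 h2 h3 hbad a b c E.
  rewrite nrm_zcomb in E.
  apply (core (dot v1 v1) (dot v2 v2) (dot v3 v3) (dot v1 v2) (dot v1 v3) (dot v2 v3)); auto.
  all: try (intros c1 c2 c3 Hc; rewrite <- nrm_zcomb; apply (min_coords L); auto; fail).
  all: unfold nrm in *; lra.
Qed.

Lemma good_basis L : is_lattice L -> min_norm L 2 ->
  exists v1 v2 v3, lattice_basis L v1 v2 v3 /\
   forall a b c : Z, nrm (zcomb a b c v1 v2 v3) = 4 -> Qf (IZR a) (IZR b) (IZR c) = 4.
Proof.
  intros [u1 [u2 [u3 Hu]]] [_ Hm].
  destruct (obtuse_exists u1 u2 u3 (proj1 Hu)) as [r1 [r2 [r3 [Hd Hob]]]].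
  pose proof (unimod_basis L u1 u2 u3 r1 r2 r3 Hu Hd) as Hb.
  set (b1 := bv u1 u2 u3 r1) in *. set (b2 := bv u1 u2 u3 r2) in *. set (b3 := bv u1 u2 u3 r3) in *.
  cbv zeta in Hob. destruct Hob as [h12 [h13 [h23 [h1 [h2 h3]]]]].
  pose proof (min_coords L b1 b2 b3 Hb Hm) as Hmin.
  pose proof (Hmin 1%Z 0%Z 0%Z ltac:(lia)) as M1. pose proof (Hmin 0%Z 1%Z 0%Z ltac:(lia)) as M2.
  pose proof (Hmin 0%Z 0%Z 1%Z ltac:(lia)) as M3. pose proof (Hmin 1%Z 1%Z 1%Z ltac:(lia)) as M4.
  rewrite nrm_zcomb in M1, M2, M3, M4. unfold G in M1, M2, M3, M4.
  assert (Hc : 4 < nrm b1 + nrm b2 + 2 * dot b1 b2 \/ 4 < nrm b1 + nrm b3 + 2 * dot b1 b3 \/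
               4 < nrm b2 + nrm b3 + 2 * dot b2 b3).
  { unfold nrm. destruct (Rlt_dec 4 (dot b1 b1 + dot b2 b2 + 2 * dot b1 b2)); [left; auto|].
    destruct (Rlt_dec 4 (dot b1 b1 + dot b3 b3 + 2 * dot b1 b3)); [right; left; auto|].
    right; right. lra. }
  destruct Hc as [Hc|[Hc|Hc]].
  - exists b1, b2, b3. split; auto. apply (finish L); auto.
  - exists b1, b3, b2. split; [apply lb_swap23; auto|].
    apply (finish L); try apply lb_swap23; auto; rewrite ?(dot_comm b3 b2); lra.
  - exists b2, b3, b1. split; [apply lb_rot; auto|].
    apply (finish L); try apply lb_rot; auto; rewrite ?(dot_comm b2 b1), ?(dot_comm b3 b1); lra.
Qed.

Lemma max_nat (A : nat -> Prop) (B : nat) :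
  (exists m, A m) -> (forall k, A k -> (k <= B)%nat) ->
  exists m, A m /\ forall k, A k -> (k <= m)%nat.
Proof.
  revert A. induction B as [|B IH]; intros A [m Hm] Hb.
  - exists m; split; auto. intros k Hk. pose proof (Hb _ Hk). pose proof (Hb _ Hm). lia.
  - destruct (classic (A (S B))) as [HS|HS].
    + exists (S B); split; auto.
    + apply IH; [eauto|]. intros k Hk. pose proof (Hb _ Hk).
      destruct (Nat.eq_dec k (S B)); [subst; contradiction|lia].
Qed.

Lemma filter_len {A} (p : A -> bool) l : (length (filter p l) <= length l)%nat.
Proof. induction l; simpl; [lia|]. destruct (p a); simpl; lia. Qed.

Lemma contacts_bound P : (contacts P <= length P * length P)%nat.
Proof.
  induction P as [|x P IH]; simpl; [lia|].
  pose proof (filter_len (fun y => if Req_EM_T (edist x y) 2 then true else false) P). nia.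
Qed.

Lemma edist_zcomb a b c a' b' c' u1 u2 u3 :
  edist (zcomb a b c u1 u2 u3) (zcomb a' b' c' u1 u2 u3) = sqrt (nrm (zcomb (a-a') (b-b') (c-c') u1 u2 u3)).
Proof. rewrite edist_nrm, zcomb_sub. reflexivity. Qed.

Lemma nth_map' {A B} (f : A -> B) l d d' i : (i < length l)%nat -> nth i (map f l) d' = f (nth i l d).
Proof. intros H. rewrite (nth_indep _ d' (f d)) by (rewrite length_map; auto). apply map_nth. Qed.

Definition goodL (L : pointset) u1 u2 u3 :=
  lattice_basis L u1 u2 u3 /\ (forall x, L x -> x <> vzero -> 2 <= edist x vzero).

Lemma packing_exists L u1 u2 u3 n : goodL L u1 u2 u3 ->
  exists P, packing L P /\ length P = n.
Proof.
  intros [[Hli Hsp] Hm].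
  exists (map (fun k => zcomb (Z.of_nat k) 0 0 u1 u2 u3) (seq 0 n)). split.
  - split.
    + intros x Hx. apply in_map_iff in Hx. destruct Hx as [k [<- _]]. apply Hsp. eauto.
    + intros i j Hij. rewrite length_map, length_seq in Hij.
      rewrite !(nth_map' _ _ 0%nat) by (rewrite length_seq; lia).
      rewrite !seq_nth by lia. simpl.
      rewrite edist_zcomb. apply sqrt_le2. apply (min_coords L); [split; auto|auto|lia].
  - rewrite length_map, length_seq; auto.
Qed.

Lemma C_exists L u1 u2 u3 n : goodL L u1 u2 u3 -> exists m, is_C L n m.
Proof.
  intros Hg.
  destruct (max_nat (fun m => exists P, packing L P /\ length P = n /\ contacts P = m) (n*n))
    as [m [Hm Hmax]].
  - destruct (packing_exists L u1 u2 u3 n Hg) as [P [HP HL]]. eauto.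
  - intros k [P [_ [HL <-]]]. rewrite <- HL. apply contacts_bound.
  - exists m. split; auto. intros P HP HL. apply Hmax. eauto.
Qed.

Definition coords (v1 v2 v3 : vec) (x : vec) : Z*Z*Z :=
  epsilon (inhabits (0,0,0)%Z) (fun t => let '(a,b,c) := t in x = zcomb a b c v1 v2 v3).

Lemma coords_spec L v1 v2 v3 x : lattice_basis L v1 v2 v3 -> L x ->
  let '(a,b,c) := coords v1 v2 v3 x in x = zcomb a b c v1 v2 v3.
Proof.
  intros [_ Hsp] Hx. unfold coords. apply epsilon_spec.
  apply Hsp in Hx. destruct Hx as [a [b [c E]]]. exists (a,b,c). auto.
Qed.

Definition gmap v1 v2 v3 w1 w2 w3 (x : vec) : vec :=
  let '(a,b,c) := coords v1 v2 v3 x in zcomb a b c w1 w2 w3.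

Lemma filter_map_mono (g : vec -> vec) (p q : vec -> bool) (l : list vec) :
  (forall y, In y l -> p y = true -> q (g y) = true) ->
  (length (filter p l) <= length (filter q (map g l)))%nat.
Proof.
  induction l as [|a l IH]; intros H; simpl; [lia|].
  destruct (p a) eqn:Ea.
  - rewrite (H a (or_introl eq_refl) Ea). simpl. apply le_n_S. apply IH; intros; apply H; simpl; auto.
  - destruct (q (g a)); simpl; [apply le_S|]; apply IH; intros; apply H; simpl; auto.
Qed.

Lemma contacts_map (g : vec -> vec) (P : list vec) :
  (forall x y, In x P -> In y P -> edist x y = 2 -> edist (g x) (g y) = 2) ->
  (contacts P <= contacts (map g P))%nat.
Proof.
  induction P as [|x P IH]; intros H; simpl; [lia|].
  apply Nat.add_le_mono.
  - apply filter_map_mono. intros y Hy. destruct (Req_EM_T (edist x y) 2) as [e|e]; [|discriminate].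
    intros _. destruct (Req_EM_T (edist (g x) (g y)) 2) as [e'|e']; auto.
    exfalso; apply e'. apply H; simpl; auto.
  - apply IH. intros; apply H; simpl; auto.
Qed.

Lemma edist_refl x : edist x x = 0.
Proof. rewrite edist_nrm. replace (nrm (vsub x x)) with 0. apply sqrt_0.
  dv; unfold nrm, dot, vsub; cbn; ring. Qed.

Lemma gmap_spec L v1 v2 v3 w1 w2 w3 x : lattice_basis L v1 v2 v3 -> L x ->
  exists a b c, x = zcomb a b c v1 v2 v3 /\ gmap v1 v2 v3 w1 w2 w3 x = zcomb a b c w1 w2 w3.
Proof.
  intros Hb Hx. pose proof (coords_spec L v1 v2 v3 x Hb Hx) as H.
  unfold gmap. destruct (coords v1 v2 v3 x) as [[a b] c]. exists a, b, c. auto.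
Qed.

Theorem mainTheorem9 (Lambda : pointset) :
  is_lattice Lambda -> min_norm Lambda 2 ->
  (forall n : nat, (1 <= n)%nat ->
     exists m1 m2 : nat, is_C Lambda n m1 /\ is_C Lambda_fcc n m2 /\ (m1 <= m2)%nat) /\
  (exists v1 v2 v3 w1 w2 w3 : vec,
     lattice_basis Lambda v1 v2 v3 /\ lattice_basis Lambda_fcc w1 w2 w3 /\
     forall a b c a' b' c' : Z,
       edist (zcomb a b c v1 v2 v3) (zcomb a' b' c' v1 v2 v3) = 2 ->
       edist (zcomb a b c w1 w2 w3) (zcomb a' b' c' w1 w2 w3) = 2).
Proof.
  intros HL Hmn.
  destruct (good_basis Lambda HL Hmn) as [v1 [v2 [v3 [Hv Hq]]]].
  assert (Hpres : forall a b c a' b' c' : Z,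
       edist (zcomb a b c v1 v2 v3) (zcomb a' b' c' v1 v2 v3) = 2 ->
       edist (zcomb a b c W1 W2 W3) (zcomb a' b' c' W1 W2 W3) = 2).
  { intros a b c a' b' c' E. rewrite edist_zcomb in *. apply eq2_sqrt. rewrite nrm_W.
    apply Hq. apply sqrt_eq2; auto. }
  split; [|exists v1, v2, v3, W1, W2, W3; split; [auto|split; [apply fcc_basis|auto]]].
  intros n _.
  assert (gL : goodL Lambda v1 v2 v3) by (split; [auto| apply (proj2 Hmn)]).
  assert (gF : goodL Lambda_fcc W1 W2 W3) by (split; [apply fcc_basis| apply fcc_min]).
  destruct (C_exists _ _ _ _ n gL) as [m1 Hm1].
  destruct (C_exists _ _ _ _ n gF) as [m2 Hm2].
  exists m1, m2. split; [auto|split; [auto|]].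
  destruct Hm1 as [[P [HP [HlP HcP]]] _]. destruct Hm2 as [_ Hmax2].
  set (g := gmap v1 v2 v3 W1 W2 W3).
  assert (HPL : forall x, In x P -> Lambda x) by (apply HP).
  rewrite <- HcP. apply Nat.le_trans with (contacts (map g P)).
  - apply contacts_map. intros x y Hx Hy E.
    destruct (gmap_spec Lambda v1 v2 v3 W1 W2 W3 x Hv (HPL x Hx)) as [a [b [c [Ex Gx]]]].
    destruct (gmap_spec Lambda v1 v2 v3 W1 W2 W3 y Hv (HPL y Hy)) as [a' [b' [c' [Ey Gy]]]].
    unfold g. rewrite Gx, Gy. apply Hpres. rewrite <- Ex, <- Ey. auto.
  - apply Hmax2; [|rewrite length_map; auto]. split.
    + intros y Hy. apply in_map_iff in Hy. destruct Hy as [x [<- Hx]].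
      destruct (gmap_spec Lambda v1 v2 v3 W1 W2 W3 x Hv (HPL x Hx)) as [a [b [c [Ex Gx]]]].
      unfold g. rewrite Gx. apply (proj2 fcc_basis). eauto.
    + intros i j Hij. rewrite length_map in Hij.
      rewrite !(nth_map' _ _ vzero) by lia.
      assert (Hi : In (nth i P vzero) P) by (apply nth_In; lia).
      assert (Hj : In (nth j P vzero) P) by (apply nth_In; lia).
      pose proof (proj2 HP i j Hij) as Hd.
      destruct (gmap_spec Lambda v1 v2 v3 W1 W2 W3 _ Hv (HPL _ Hi)) as [a [b [c [Ex Gx]]]].
      destruct (gmap_spec Lambda v1 v2 v3 W1 W2 W3 _ Hv (HPL _ Hj)) as [a' [b' [c' [Ey Gy]]]].
      unfold g. rewrite Gx, Gy. rewrite edist_zcomb. apply sqrt_le2.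
      apply (min_coords Lambda_fcc); [apply fcc_basis|apply fcc_min|].
      intros [E1 [E2 E3]].
      assert (a = a' /\ b = b' /\ c = c')%Z as [-> [-> ->]] by lia.
      rewrite Ex, <- Ey, edist_refl in Hd. lra.
Qed.
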